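(* Let $T\in\mathcal L(\mathcal P_n)$, $T\ne0$, and suppose there is a constant $C>0$ such that for each nonconstant $f\in\mathcal P_n$ there exist $u\in Z(f)$ and $v\in Z(Tf)$ with $|u-v|\le C$. Then $$T=a_0I+a_1D+\cdots+a_nD^n,\qquad\text{where } a_k=(T\phi_k)(0)\ (k=0,\dots,n)\ \text{and}\ a_0\neq0.$$
   Context: Let $n\ge 1$ be an integer and $\mathcal P_n$ the complex vector space of polynomials in one complex variable of degree at most $n$; $\mathcal L(\mathcal P_n)$ is the set of linear operators $\mathcal P_n\to\mathcal P_n$; $\phi_k(z)=z^k/k!$; $D$ is differentiation on $\mathcal P_n$ and $I$ the identity. For a nonzero $f$, $Z(f)$ is the multiset of roots of $f$ (with multiplicity; empty for nonzero constants); $Z(0)=\mathbb C$. *)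

(* Defs.v *)
(* complex numbers as R[i] over an arbitrary realType R
   (every realType is a model of the real numbers). *)
From HB Require Import structures.
From mathcomp Require Import all_boot all_order all_algebra.
From mathcomp Require Import reals complex.
Set Implicit Arguments. Unset Strict Implicit. Unset Printing Implicit Defensive.
Import Order.TTheory GRing.Theory Num.Theory.
Local Open Scope ring_scope.

Definition inPn {K : nzRingType} (n : nat) (p : {poly K}) : bool :=
  (size p <= n.+1)%N.

Definition phi {K : fieldType} (k : nat) : {poly K} := (k`!%:R)^-1 *: 'X^k.

(* T is a linear operator P_n -> P_n (represented by a function on {poly K};
   its values outside P_n are irrelevant). *)
Definition is_op_Pn {K : fieldType} (n : nat) (T : {poly K} -> {poly K}) : Prop :=
  (forall f, inPn n f -> inPn n (T f)) /\
  (forall (a : K) f g, inPn n f -> inPn n g -> T (a *: f + g) = a *: T f + T g).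

(* Main.v *)
Require Import Defs.
From HB Require Import structures.
From mathcomp Require Import all_boot all_order all_algebra.
From mathcomp Require Import reals complex.
From mathcomp Require Import ring.
Import Order.TTheory GRing.Theory Num.Theory.
Local Open Scope ring_scope.
Set Implicit Arguments. Unset Strict Implicit. Unset Printing Implicit Defensive.

Section Gen.
Variable K : comNzRingType.

Lemma nderivn_deriv (q : {poly K}) i : (q^`N(i))^`() = q^`N(i.+1) *+ i.+1.
Proof.
apply/polyP=> k; rewrite coef_deriv coefMn !coef_nderivn -!mulrnA addSnnS.
congr (_ *+ _); rewrite mulnC [RHS]mulnC.
have := mul_bin_left (i.+1 + k) i.
rewrite addSn subSn ?leq_addr // addKn; move=> H; idtac.
by rewrite addnS H.
Qed.

Lemma deriv_nderivn (q : {poly K}) j : (q^`())^`N(j) = q^`N(j.+1) *+ j.+1.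
Proof.
apply/polyP=> k; rewrite coef_nderivn coefMn coef_deriv coef_nderivn -!mulrnA.
rewrite addSn; congr (_ *+ _).
by have := mul_bin_diag (j + k).+1 j => /= ->; rewrite mulnC.
Qed.

Lemma regroup (X : nat -> nat -> {poly K}) (n d : nat) :
  (forall j, X n.+1 j = 0) -> (forall i, X i n.+1 = 0) ->
  \sum_(i < n.+1) \sum_(j < n.+1)
     (if (i + j)%N == d then (-1) ^+ j *: (X i.+1 j *+ i.+1) else 0)
  - \sum_(i < n.+1) \sum_(j < n.+1)
     (if (i + j)%N == d then (-1) ^+ j *: (X i j.+1 *+ j.+1) else 0)
  = (\sum_(i < n.+1) \sum_(j < n.+1)
     (if (i + j)%N == d.+1 then (-1) ^+ j *: X i j else 0)) *+ d.+1.
Proof.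
move=> X1 X2.
have E : forall i j : nat, (if (i + j)%N == d.+1 then (-1) ^+ j *: X i j else 0) *+ d.+1
   = (if (i + j)%N == d.+1 then (-1) ^+ j *: (X i j *+ i) else 0)
   + (if (i + j)%N == d.+1 then (-1) ^+ j *: (X i j *+ j) else 0).
  move=> i j; case: eqP => [<-|_]; last by rewrite mul0rn addr0.
  by rewrite -scalerDr -mulrnDr -scalerMnr.
rewrite -sumrMnl.
rewrite [RHS](eq_bigr (fun i : 'I_n.+1 => \sum_(j < n.+1) ((if (i + j)%N == d.+1 then (-1) ^+ j *: (X i j *+ i) else 0) +
    (if (i + j)%N == d.+1 then (-1) ^+ j *: (X i j *+ j) else 0)))); last first.
  by move=> i _; rewrite -sumrMnl; apply: eq_bigr => j _; exact: E.
under [RHS]eq_bigr do rewrite big_split /=.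
rewrite big_split /=; congr (_ + _).
  rewrite [RHS]big_ord_recl /= [X in X + _]big1 ?add0r; last first.
    by move=> j _; case: ifP => // _; rewrite mulr0n scaler0.
  rewrite [LHS]big_ord_recr /= [X in _ + X]big1 ?addr0; last first.
    by move=> j _; case: ifP => // _; rewrite X1 mul0rn scaler0.
  apply: eq_bigr => i _; apply: eq_bigr => j _.
  by rewrite /bump /= add1n addSn eqSS.
rewrite -sumrN; apply: eq_bigr => i _.
rewrite [RHS]big_ord_recl /=.
rewrite [X in X + _](_ : _ = 0) ?add0r; last first.
  by case: ifP => // _; rewrite mulr0n scaler0.
rewrite -sumrN [LHS]big_ord_recr /= [X in _ + X](_ : _ = 0) ?addr0; last first.
  by case: ifP => _; rewrite ?(X2 i) ?mul0rn ?scaler0 oppr0.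
apply: eq_bigr => j _.
rewrite /bump /= add1n addnS eqSS; case: ifP => _; last by rewrite oppr0.
by rewrite exprS mulN1r scaleNr.
Qed.


End Gen.

Lemma limit_contra (F : numFieldType) (q : nat -> {poly F}) (M N : nat) (c Cb : F) :
  (0 < N)%N -> (N < M)%N -> c != 0 -> q N = c%:P ->
  (forall d, (N < d)%N -> q d = 0) ->
  (forall w : F, exists z, `|z| <= Cb /\ \sum_(d < M) w ^+ d * (q d).[z] = 0) ->
  False.
Proof.
move=> N0 NM c0 qN qd H.
have Cb0 : 0 <= Cb by case: (H 0) => z [+ _]; apply: le_trans.
pose B d := \sum_(i < size (q d)) `|(q d)`_i| * Cb ^+ i.
have B0 d : 0 <= B d.
  by apply: sumr_ge0 => i _; rewrite mulr_ge0 ?normr_ge0 ?exprn_ge0.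
have Bb d z : `|z| <= Cb -> `|(q d).[z]| <= B d.
  move=> hz; rewrite horner_coef; apply: le_trans (ler_norm_sum _ _ _) _.
  apply: ler_sum => i _.
  by rewrite normrM normrX ler_wpM2l ?normr_ge0 // lerXn2r // ?nnegrE ?normr_ge0.
pose S := \sum_(d < N) B d.
have S0 : 0 <= S by apply: sumr_ge0 => d _.
have nc : 0 < `|c| by rewrite normr_gt0.
pose w := 1 + S / `|c|.
have w1 : 1 <= w by rewrite lerDl divr_ge0 // ltW.
have w0 : 0 < w by apply: lt_le_trans w1.
have [z [hz e]] := H w.
have sp : \sum_(d < M) w ^+ d * (q d).[z] = \sum_(d < N) w ^+ d * (q d).[z] + w ^+ N * c.
  rewrite -(subnKC NM) big_split_ord /= big_ord_recr /= qN hornerC.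
  rewrite [X in _ + X]big1 ?addr0 // => i _.
  by rewrite qd ?horner0 ?mulr0 // /= ltnS leq_addr.
move: e; rewrite sp => /eqP; rewrite addrC addr_eq0 => /eqP e.
have h1 : `|w ^+ N * c| <= w ^+ N.-1 * S.
  rewrite e normrN; apply: le_trans (ler_norm_sum _ _ _) _.
  rewrite /S mulr_sumr; apply: ler_sum => d _.
  rewrite normrM normrX (ger0_norm (ltW w0)).
  apply: le_trans (ler_wpM2l (exprn_ge0 _ (ltW w0)) (Bb d z hz)) _.
  rewrite ler_wpM2r // ler_weXn2l // -ltnS prednK //.
have h2 : `|w ^+ N * c| = w ^+ N.-1 * (`|c| + S).
  rewrite normrM normrX (ger0_norm (ltW w0)).
  have -> : w ^+ N = w * w ^+ N.-1 by rewrite -exprS prednK.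
  rewrite [w * _]mulrC -mulrA; congr (_ * _).
  by rewrite /w mulrDl mul1r divfK // normr_eq0.
move: h1; rewrite h2 ler_pM2l ?exprn_gt0 // gerDr.
by move/(lt_le_trans nc); rewrite ltxx.
Qed.

Section Main.
Variable R : realType.
Variable n : nat.
Variable T : {poly R[i]} -> {poly R[i]}.
Hypothesis HT : is_op_Pn n T.

Local Notation P := (@inPn R[i] n).

Lemma inPn0 : P 0. Proof. by rewrite /inPn size_poly0. Qed.
Lemma inPnD p q : P p -> P q -> P (p + q).
Proof. by rewrite /inPn => hp hq; rewrite (leq_trans (size_polyD _ _)) // geq_max hp hq. Qed.
Lemma inPnZ a p : P p -> P (a *: p).
Proof. by rewrite /inPn => hp; rewrite (leq_trans (size_scale_leq _ _)). Qed.
Lemma inPnMn p k : P p -> P (p *+ k).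
Proof. by move=> hp; rewrite -scaler_nat inPnZ. Qed.
Lemma inPn_sum (I : Type) (r : seq I) (Q : pred I) (F : I -> {poly R[i]}) :
  (forall i, Q i -> P (F i)) -> P (\sum_(i <- r | Q i) F i).
Proof.
move=> h; elim: r => [|x r IH]; first by rewrite big_nil inPn0.
by rewrite big_cons; case: ifP => // Qx; rewrite inPnD // h.
Qed.
Lemma inPn_nderivn p j : P p -> P p^`N(j).
Proof.
by rewrite /inPn => hp; rewrite /nderivn (leq_trans (size_poly _ _)) // (leq_trans (leq_subr _ _)).
Qed.
Lemma inPnX m : (m <= n)%N -> P 'X^m.
Proof. by rewrite /inPn size_polyXn. Qed.
Lemma inPn_deriv p : P p -> P p^`().
Proof. by move=> hp; rewrite -nderivn1 inPn_nderivn. Qed.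

Lemma T_in p : P p -> P (T p). Proof. exact: HT.1. Qed.
Lemma T0 : T 0 = 0.
Proof.
have := HT.2 1 0 0 inPn0 inPn0; rewrite !scale1r addr0 => h.
by apply: (@addrI _ (T 0)); rewrite addr0 -h.
Qed.
Lemma TZ a p : P p -> T (a *: p) = a *: T p.
Proof. by move=> hp; have := HT.2 a p 0 hp inPn0; rewrite !addr0 T0 addr0. Qed.
Lemma TD p q : P p -> P q -> T (p + q) = T p + T q.
Proof. by move=> hp hq; have := HT.2 1 p q hp hq; rewrite !scale1r. Qed.
Lemma TMn p k : P p -> T (p *+ k) = T p *+ k.
Proof. by move=> hp; rewrite -scaler_nat TZ // scaler_nat. Qed.
Lemma Tsum (I : Type) (r : seq I) (Q : pred I) (F : I -> {poly R[i]}) :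
  (forall i, Q i -> P (F i)) -> T (\sum_(i <- r | Q i) F i) = \sum_(i <- r | Q i) T (F i).
Proof.
move=> h; elim: r => [|x r IH]; first by rewrite !big_nil T0.
rewrite !big_cons; case: ifP => // Qx.
by rewrite TD ?IH // ?h // inPn_sum.
Qed.

Definition A d p := \sum_(i < n.+1) \sum_(j < n.+1)
  (if (i + j)%N == d then (-1) ^+ j *: (T (p^`N(j)))^`N(i) else 0).

Lemma A_in d p : P p -> P (A d p).
Proof.
move=> hp; apply: inPn_sum => i _; apply: inPn_sum => j _.
by case: ifP => _; rewrite ?inPn0 // inPnZ // inPn_nderivn // T_in // inPn_nderivn.
Qed.

Lemma A0 p : P p -> A 0 p = T p.
Proof.
move=> hp; rewrite /A big_ord_recl big_ord_recl /= nderivn0 nderivn0 expr0 scale1r.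
rewrite big1 ?addr0; last by move=> j _.
by rewrite big1 ?addr0 // => i _; rewrite big1.
Qed.

Lemma A_big d p : (n + n < d)%N -> A d p = 0.
Proof.
move=> hd; rewrite /A big1 // => i _; rewrite big1 // => j _.
case: eqP => // E; exfalso; move: hd; rewrite -E ltnNge.
by rewrite leq_add // -ltnS.
Qed.

Lemma AZ d a p : P p -> A d (a *: p) = a *: A d p.
Proof.
move=> hp; rewrite /A scaler_sumr; apply: eq_bigr => i _.
rewrite scaler_sumr; apply: eq_bigr => j _.
case: ifP => _; last by rewrite scaler0.
rewrite nderivnZ TZ ?inPn_nderivn // nderivnZ.
by rewrite !scalerA mulrC.
Qed.

Lemma AMn d k p : P p -> A d (p *+ k) = A d p *+ k.
Proof. by move=> hp; rewrite -[p *+ k]scaler_nat AZ // scaler_nat. Qed.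

Lemma A_comm d p : P p -> (A d p)^`() - A d (p^`()) = A d.+1 p *+ d.+1.
Proof.
move=> hp.
pose X i j := (T (p^`N(j)))^`N(i).
have X1 j : X n.+1 j = 0.
  by rewrite /X nderivn_poly0 //; apply: T_in; apply: inPn_nderivn.
have X2 i : X i n.+1 = 0.
  by rewrite /X (nderivn_poly0 (p := p)) // T0 nderivn_poly0 // size_poly0.
rewrite -(@regroup _ X n d X1 X2); congr (_ - _).
  rewrite /A raddf_sum; apply: eq_bigr => i _.
  rewrite raddf_sum; apply: eq_bigr => j _.
  case: ifP => _; last by rewrite raddf0.
  by rewrite /= derivZ nderivn_deriv.
apply: eq_bigr => i _; apply: eq_bigr => j _.
case: ifP => _ //.
by rewrite deriv_nderivn TMn ?inPn_nderivn // nderivnMn.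
Qed.

Lemma XsubC_exp (w : R[i]) m : (m <= n)%N ->
  ('X - w%:P) ^+ m = \sum_(j < n.+1) (-w) ^+ j *: ('X^m)^`N(j).
Proof.
move=> hm; rewrite -polyCN exprDn.
rewrite (big_ord_widen n.+1 (fun j => ('X ^+ (m - j) * (-w)%:P ^+ j) *+ 'C(m, j))) ?ltnS //.
rewrite big_mkcond; apply: eq_bigr => j _; rewrite nderivnXn; case: ltnP => hj.
  by rewrite -rmorphXn mulrC mul_polyC scalerMnr.
by rewrite bin_small // mulr0n scaler0.
Qed.

Lemma A_eval m w z : (m <= n)%N ->
  (T (('X - w%:P) ^+ m)).[z + w] = \sum_(d < n.+1 + n.+1) w ^+ d * (A d 'X^m).[z].
Proof.
move=> hm; rewrite XsubC_exp // Tsum => [|j _]; last first.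
  by rewrite inPnZ // inPn_nderivn // inPnX.
rewrite horner_sum.
pose X i j := (T (('X^m)^`N(j)))^`N(i).
have E1 : forall j : 'I_n.+1, (T ((-w) ^+ j *: ('X^m)^`N(j))).[z + w] =
    \sum_(i < n.+1) (-w) ^+ j * ((X i j).[z] * w ^+ i).
  move=> j; rewrite TZ ?inPn_nderivn ?inPnX // hornerZ.
  rewrite (@nderiv_taylor_wide _ n.+1 _ _ _ (mulrC z w)) ?mulr_sumr //.
  by apply: T_in; rewrite inPn_nderivn // inPnX.
under eq_bigr do rewrite E1.
rewrite [RHS](eq_bigr (fun d : 'I_(n.+1 + n.+1) => \sum_(i < n.+1) \sum_(j < n.+1)
   (if (i + j)%N == d then w ^+ (i + j) * ((-1) ^+ j * (X i j).[z]) else 0))); last first.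
  move=> d _; rewrite /A horner_sum mulr_sumr; apply: eq_bigr => i _.
  rewrite horner_sum mulr_sumr; apply: eq_bigr => j _.
  case: eqP => [<-|_]; last by rewrite horner0 mulr0.
  by rewrite hornerZ.
rewrite exchange_big [RHS]exchange_big; apply: eq_bigr => i _.
rewrite [RHS]exchange_big; apply: eq_bigr => j _.
rewrite -big_mkcond /=.
rewrite (eq_bigl (fun d : 'I_(n.+1 + n.+1) => d == (i + j)%N :> nat)); last first.
  by move=> d; rewrite eq_sym.
rewrite (big_ord1_eq _ (fun _ => w ^+ (i + j) * ((-1) ^+ j * (X i j).[z]))) ifT; last first.
  by rewrite -addSn leq_add // ltnW.
rewrite (exprNn w) exprD; ring.
Qed.

Lemma deriv0_const (p : {poly R[i]}) : p^`() = 0 -> p = (p`_0)%:P.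
Proof.
move=> h; apply/polyP => i; rewrite coefC; case: i => [|i] //=.
have := congr1 (fun q : {poly R[i]} => q`_i) h; rewrite coef_deriv coef0 => /eqP.
by rewrite mulrn_eq0 /= => /eqP.
Qed.

Lemma expand f : P f -> f = \sum_(m < n.+1) f`_m *: 'X^m.
Proof.
move=> hf; rewrite -poly_def; apply/polyP => i; rewrite coef_poly.
by case: ltnP => // hi; rewrite nth_default // (leq_trans hf hi).
Qed.

Lemma T_expand f : P f -> T f = \sum_(m < n.+1) f`_m *: T 'X^m.
Proof.
move=> hf; rewrite {1}(expand hf) Tsum => [|m _]; last by rewrite inPnZ // inPnX // -ltnS.
by apply: eq_bigr => m _; rewrite TZ // inPnX // -ltnS.
Qed.

Variable Cb : R[i].
Hypothesis Hz : forall m, (0 < m <= n)%N -> forall w : R[i], exists z,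
  `|z| <= Cb /\ \sum_(d < n.+1 + n.+1) w ^+ d * (A d 'X^m).[z] = 0.

Lemma no_top N : (0 < N)%N ->
  (forall d, (N < d)%N -> forall m, (m <= n)%N -> A d 'X^m = 0) ->
  forall m, (m <= n)%N -> A N 'X^m = 0.
Proof.
move=> N0 hi m hm; apply/eqP/negPn/negP => hne.
pose B m := A N 'X^m.
have comm k : (k <= n)%N -> (B k)^`() = B k.-1 *+ k.
  move=> hk; have := A_comm N (inPnX hk).
  rewrite (hi N.+1) ?ltnSn // mul0rn derivXn AMn ?inPnX ?(leq_trans (leq_pred k)) //.
  by move/eqP; rewrite subr_eq0 => /eqP.
have diag k : (k <= n)%N -> (B k)`_k = (B 0)`_0.
  elim: k => [//|k IH] hk.
  have := congr1 (fun q : {poly R[i]} => q`_k) (comm k.+1 hk); rewrite coef_deriv coefMn => e.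
  change (k.+1.-1) with k in e.
  rewrite -IH; last exact: ltnW.
  move/eqP: e; rewrite -subr_eq0 -mulrnBl mulrn_eq0 orFb.
  by rewrite subr_eq0 => /eqP.
have tr : \sum_(k < n.+1) (B k)`_k *+ N = 0.
  pose g k := (A N.-1 'X^(k.-1))`_k *+ k.
  have t k : (k <= n)%N -> (B k)`_k *+ N = g k.+1 - g k.
    move=> hk; have := A_comm N.-1 (inPnX hk); rewrite prednK // => e.
    rewrite -coefMn -e coefB coef_deriv derivXn AMn ?inPnX ?(leq_trans (leq_pred k)) //.
    by rewrite coefMn.
  rewrite (eq_bigr (fun k : 'I_n.+1 => g k.+1 - g k)) => [|k _]; last first.
    by apply: t; rewrite -ltnS.
  rewrite -(big_mkord xpredT (fun k => g k.+1 - g k)) telescope_sumr // /g /= mulr0n subr0.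
  rewrite nth_default ?mul0rn //.
  by have := A_in N.-1 (inPnX (leqnn n)).
have b0 : (B 0)`_0 = 0.
  move: tr; rewrite (eq_bigr (fun _ => (B 0)`_0 *+ N)) => [|k _]; last first.
    by rewrite diag // -ltnS.
  rewrite sumr_const card_ord -mulrnA => /eqP; rewrite mulrn_eq0 muln_eq0 /=.
  by rewrite -[N == 0]negbK -lt0n N0 /= => /eqP.
have ex : exists k, (k <= n)%N && (B k != 0) by exists m; rewrite hm hne.
case: (ex_minnP ex) => k /andP[hk Bk] kmin.
have dk : (B k)^`() = 0.
  rewrite comm //; case: k hk Bk kmin => [|k] hk Bk kmin; first by rewrite mulr0n.
  have : B k == 0.
    apply/negPn/negP => nz; have := kmin k.
    by rewrite nz (leq_trans (leqnSn k) hk) ltnn => /(_ isT).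
  by move/eqP => /= ->; rewrite mul0rn.
have ck := deriv0_const dk.
have c0 : (B k)`_0 != 0.
  by apply: contra Bk => /eqP c0; rewrite ck c0.
have k0 : (0 < k)%N.
  by rewrite lt0n; apply: contra c0 => /eqP k0; rewrite k0 b0.
have NM : (N < n.+1 + n.+1)%N.
  rewrite ltnNge; apply/negP => hN; move: hne; rewrite A_big ?eqxx //.
  by apply: leq_trans hN; rewrite addSn ltnS addnS leqnSn.
apply: (@limit_contra _ (fun d => A d 'X^k) (n.+1 + n.+1) N ((B k)`_0) Cb N0 NM c0).
- exact: ck.
- by move=> d hd; apply: hi.
- by apply: Hz; rewrite k0 hk.
Qed.

End Main.


Theorem mainTheorem10 (R : realType) (n : nat) (T : {poly R[i]} -> {poly R[i]})
  (C : R) :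
  (1 <= n)%N ->
  is_op_Pn n T ->
  (exists f, inPn n f /\ T f != 0) ->
  0 < C ->
  (forall f : {poly R[i]}, inPn n f -> (1 < size f)%N ->
     exists u v : R[i], [/\ root f u, root (T f) v & `|u - v| <= (C%:C)%C]) ->
  (forall f, inPn n f ->
     T f = \sum_(k < n.+1) (T (phi k)).[0] *: f^`(k)) /\
  (T (phi 0)).[0] != 0.
Proof.
move=> n1 HT [f0 [f0P Tf0]] C0 Hroot.
have Hz : forall m, (0 < m <= n)%N -> forall w : R[i], exists z,
    `|z| <= (C%:C)%C /\ \sum_(d < n.+1 + n.+1) w ^+ d * (A n T d 'X^m).[z] = 0.
  move=> m /andP[m0 mn] w.
  have f_in : inPn n (('X - w%:P) ^+ m) by rewrite /inPn size_exp_XsubC.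
  have sz : (1 < size (('X - w%:P) ^+ m))%N by rewrite size_exp_XsubC ltnS.
  have [u [v [ru rv uv]]] := Hroot _ f_in sz.
  exists (v - w); split.
    move: ru; rewrite rootE horner_exp hornerXsubC expf_eq0 m0 /= subr_eq0 => /eqP <-.
    by rewrite distrC.
  by rewrite -(A_eval HT) // subrK; apply/eqP.
have allz : forall d, (0 < d)%N -> forall m, (m <= n)%N -> A n T d 'X^m = 0.
  suff H : forall k d, (n + n - k < d)%N -> (0 < d)%N ->
      forall m, (m <= n)%N -> A n T d 'X^m = 0.
    by move=> d d0; apply: (H (n + n)) => //; rewrite subnn.
  elim=> [|k IH] d hd d0 m hm; first by rewrite subn0 in hd; rewrite A_big.
  case: (ltnP (n + n - k) d) => h; first exact: IH.
  apply: (no_top HT Hz d0) => // d' hd' m' hm'.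
  apply: IH => //; last exact: leq_ltn_trans hd'.
  apply: leq_ltn_trans hd'.
  by move: hd; rewrite subnS; case: (n + n - k)%N.
have commT : forall m, (m <= n)%N -> (T 'X^m)^`() = T 'X^(m.-1) *+ m.
  move=> m hm; have hm' : (m.-1 <= n)%N by rewrite (leq_trans (leq_pred m)).
  have := A_comm HT 0 (inPnX R hm).
  rewrite (allz 1%N) // mul0rn derivXn (AMn HT) ?inPnX //.
  rewrite (A0 T (inPnX R hm)) (A0 T (inPnX R hm')).
  by move/eqP; rewrite subr_eq0 => /eqP.
have ex : exists m, (m <= n)%N && (T 'X^m != 0).
  case: (boolP [exists m : 'I_n.+1, T 'X^m != 0]) => [/existsP [m hm]|/existsPn all0].
    by exists m; rewrite -ltnS ltn_ord hm.
  move: Tf0; rewrite (T_expand HT f0P) big1 ?eqxx // => m _.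
  by move/negPn/eqP: (all0 m) => ->; rewrite scaler0.
case: (ex_minnP ex) => k /andP[hk Tk] kmin.
have dk : (T 'X^k)^`() = 0.
  rewrite commT //; case: k hk Tk kmin => [|k] hk Tk kmin; first by rewrite mulr0n.
  have : T 'X^k == 0.
    apply/negPn/negP => nz; have := kmin k.
    by rewrite nz (leq_trans (leqnSn k) hk) ltnn => /(_ isT).
  by move/eqP => /= ->; rewrite mul0rn.
have ck := deriv0_const dk.
have c0 : (T 'X^k)`_0 != 0.
  by apply: contra Tk => /eqP c0; rewrite ck c0.
have k0 : k = 0%N.
  case: k hk Tk kmin dk ck c0 => // k hk _ _ _ ck c0.
  have sz : (1 < size ('X^(k.+1) : {poly R[i]}))%N by rewrite size_polyXn.
  have [u [v [_ rv _]]] := Hroot 'X^(k.+1) (inPnX R hk) sz.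
  by move: rv; rewrite ck rootC (negbTE c0).
have a0 : (T (phi 0)).[0] != 0.
  by rewrite /phi fact0 mulr1n invr1 scale1r -k0 ck hornerC.
split => //.
pose a j := (T (phi j)).[0].
pose S p := \sum_(j < n.+1) a j *: p^`(j).
have Sd p : (S p)^`() = S p^`().
  rewrite /S raddf_sum; apply: eq_bigr => j _.
  by rewrite /= derivZ -derivnS derivSn.
have SMn p j : S (p *+ j) = S p *+ j.
  by rewrite /S -sumrMnl; apply: eq_bigr => i _; rewrite derivnMn scalerMnr.
have am m : (m <= n)%N -> a m * m`!%:R = (T 'X^m)`_0.
  move=> hm; rewrite /a /phi (TZ HT) ?inPnX // hornerZ horner_coef0 mulrAC mulVf ?mul1r //.
  by rewrite pnatr_eq0 -lt0n fact_gt0.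
have zero_of m : (m <= n)%N -> (T 'X^m - S 'X^m)^`() = 0 -> T 'X^m = S 'X^m.
  move=> hm d0; apply/eqP; rewrite -subr_eq0; apply/eqP.
  rewrite (deriv0_const d0); apply/eqP; rewrite polyC_eq0 coefB subr_eq0; apply/eqP.
  rewrite /S coef_sum (bigD1 (Ordinal (hm : (m < n.+1)%N))) //= big1 ?addr0.
    by rewrite coefZ coef_derivn addn0 coefXn eqxx ffactnn -am.
  move=> j /eqP hj; rewrite coefZ coef_derivn addn0 coefXn.
  case: eqP => [hjm|]; last by rewrite mul0rn mulr0.
  by exfalso; apply: hj; apply: val_inj.
have rep : forall m, (m <= n)%N -> T 'X^m = S 'X^m.
  elim=> [|m IH] hm; apply: zero_of => //; rewrite derivB Sd commT // derivXn SMn.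
    by rewrite !mulr0n subrr.
  change (m.+1.-1) with m; rewrite (IH (ltnW hm)).
  by rewrite subrr.
have Slin (c : 'I_n.+1 -> R[i]) (q : 'I_n.+1 -> {poly R[i]}) :
    S (\sum_(m < n.+1) c m *: q m) = \sum_(m < n.+1) c m *: S (q m).
  rewrite /S; transitivity (\sum_(j < n.+1) \sum_(m < n.+1) a j *: (c m *: (q m)^`(j))).
    apply: eq_bigr => j _; rewrite raddf_sum scaler_sumr; apply: eq_bigr => m _.
    by rewrite /= derivnZ.
  rewrite exchange_big; apply: eq_bigr => m _; rewrite scaler_sumr.
  by apply: eq_bigr => j _; rewrite !scalerA mulrC.
move=> f hf; rewrite (T_expand HT hf).
transitivity (\sum_(m < n.+1) f`_m *: S 'X^m).
  by apply: eq_bigr => m _; rewrite rep // -ltnS.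
rewrite -(Slin (fun m => f`_m) (fun m => 'X^m)) -(expand hf).
by [].
Qed.
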